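(* Let $G=(V,E)$ be a connected almost bipartite permutation graph that contains a hole, let $C$ be a shortest hole of $G$, $m=|C|$, and let $c_0,c_1,\dots,c_{m-1}$ be the vertices of $C$ in cyclic order, with indices taken modulo $m$. Then for every vertex $v\in V$ either $N(v)\cap C=\{c_i\}$ for some $i\in\{0,\dots,m-1\}$, or $N(v)\cap C=\{c_i,c_{i+2}\}$ for some $i\in\{0,\dots,m-1\}$.
   Context: All graphs are finite, simple, undirected; $N(v)$ denotes the (open) neighborhood of $v$. A hole is an induced cycle on at least five vertices. $K_3$ is the triangle and $C_k$ the cycle on $k$ vertices. $T_2$ is the tree on 7 vertices obtained from the claw $K_{1,3}$ by subdividing each of its three edges once. $X_2$ is the 7-vertex graph obtained from a 4-cycle by attaching one new pendant vertex to each of three of its four vertices. $X_3$ is the 7-vertex graph obtained from the domino (two 4-cycles sharing exactly one edge) by attaching one new pendant vertex to one endpoint of the shared edge. A graph is an almost bipartite permutation graph if it contains none of $T_2, X_2, X_3, K_3, C_5,\dots,C_9$ as an induced subgraph. *)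

(* Defs.v *)
From mathcomp Require Import all_boot.
Set Implicit Arguments. Unset Strict Implicit. Unset Printing Implicit Defensive.

Definition edges_rel (n : nat) (s : seq (nat * nat)) : rel 'I_n :=
  fun i j => ((nat_of_ord i, nat_of_ord j) \in s) || ((nat_of_ord j, nat_of_ord i) \in s).

Definition cycle_rel (n : nat) : rel 'I_n :=
  fun i j => (nat_of_ord j == (i + 1) %% n) || (nat_of_ord i == (j + 1) %% n).

Arguments edges_rel : clear implicits.
Arguments cycle_rel : clear implicits.

Definition K3 : rel 'I_3 := cycle_rel 3.

(* T2: center 0, subdivision vertices 1 2 3, leaves 4 5 6 *)
Definition T2 : rel 'I_7 :=
  edges_rel 7 [:: (0,1); (0,2); (0,3); (1,4); (2,5); (3,6)].

(* X2: 4-cycle 0-1-2-3-0 with pendants 4,5,6 attached to 0,1,2 *)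
Definition X2 : rel 'I_7 :=
  edges_rel 7 [:: (0,1); (1,2); (2,3); (3,0); (0,4); (1,5); (2,6)].

(* X3: domino = 4-cycles 0-1-2-3-0 and 1-4-5-2-1 sharing edge 1-2,
   plus pendant 6 attached to endpoint 1 of the shared edge *)
Definition X3 : rel 'I_7 :=
  edges_rel 7 [:: (0,1); (1,2); (2,3); (3,0); (1,4); (4,5); (5,2); (1,6)].

Definition induced_in (T : finType) (e : rel T) (n : nat) (h : rel 'I_n) : Prop :=
  exists f : 'I_n -> T, injective f /\ forall i j, e (f i) (f j) = h i j.

Definition simple_graph (T : finType) (e : rel T) : Prop :=
  symmetric e /\ irreflexive e.

Definition connected_graph (T : finType) (e : rel T) : Prop :=
  forall x y, connect e x y.

Definition almost_bipartite_permutation (T : finType) (e : rel T) : Prop :=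
  [/\ ~ induced_in e T2, ~ induced_in e X2, ~ induced_in e X3,
      ~ induced_in e K3
    & forall k : nat, 5 <= k <= 9 -> ~ induced_in e (cycle_rel k)].

Definition is_hole (T : finType) (e : rel T) (m : nat) (c : 'I_m -> T) : Prop :=
  5 <= m /\ injective c /\ forall i j, e (c i) (c j) = cycle_rel m i j.

Definition ord_add (m : nat) (i : 'I_m) (k : nat) : 'I_m :=
  Ordinal (@ltn_pmod (i + k) m (leq_ltn_trans (leq0n i) (ltn_ord i))).

Definition nbr_on (T : finType) (e : rel T) (m : nat) (c : 'I_m -> T) (v : T) : {set T} :=
  [set u | e v u & u \in codom c].

(* Main.v *)
Require Import Defs.
From mathcomp Require Import all_boot zify.
Set Implicit Arguments. Unset Strict Implicit. Unset Printing Implicit Defensive.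

Definition twinfree n (h : nat -> nat -> bool) : bool :=
  all (fun i => all (fun j => (i == j) || has (fun k => h i k != h j k) (iota 0 n)) (iota 0 n)) (iota 0 n).

Definition edn (s : seq (nat * nat)) : nat -> nat -> bool :=
  fun i j => has (fun p => p == (i, j)) s || has (fun p => p == (j, i)) s.
Lemma ednE s n (i j : 'I_n) : edges_rel n s i j = edn s i j.
Proof. by rewrite /edges_rel /edn -!has_pred1. Qed.
Definition cyn n : nat -> nat -> bool :=
  fun i j => (j == (i + 1) %% n) || (i == (j + 1) %% n).

Lemma T2_tf : twinfree 7 (edn [:: (0,1); (0,2); (0,3); (1,4); (2,5); (3,6)]). Proof. by vm_compute. Qed.
Lemma X2_tf : twinfree 7 (edn [:: (0,1); (1,2); (2,3); (3,0); (0,4); (1,5); (2,6)]). Proof. by vm_compute. Qed.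
Lemma K3_tf : twinfree 3 (cyn 3). Proof. by vm_compute. Qed.

Lemma induced_tf (T : finType) (e : rel T) n (h : rel 'I_n) (hn : nat -> nat -> bool) (f : 'I_n -> T) :
  (forall i j : 'I_n, h i j = hn i j) ->
  twinfree n hn -> (forall i j, e (f i) (f j) = h i j) -> induced_in e h.
Proof.
move=> hE tf H; exists f; split=> // i j fij.
apply/val_inj/eqP; move/allP: tf => /(_ i); rewrite mem_iota add0n ltn_ord => /(_ isT).
move/allP => /(_ j); rewrite mem_iota add0n ltn_ord => /(_ isT).
case/orP=> // /hasP [k]; rewrite mem_iota add0n => kn.
by rewrite -(hE i (Ordinal kn)) -(hE j (Ordinal kn)) -!H fij eqxx.
Qed.

Lemma ord7P (P : nat -> Prop) : P 0 -> P 1 -> P 2 -> P 3 -> P 4 -> P 5 -> P 6 ->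
  forall a, a < 7 -> P a.
Proof. by move=> ? ? ? ? ? ? ? [|[|[|[|[|[|[|a]]]]]]]. Qed.

Lemma induced7 (T : finType) (e : rel T) (h : rel 'I_7) (hn : nat -> nat -> bool) (x0 : T) xs :
  (forall i j : 'I_7, h i j = hn i j) -> twinfree 7 hn ->
  (forall a, a < 7 -> forall b, b < 7 -> e (nth x0 xs a) (nth x0 xs b) = hn a b) -> induced_in e h.
Proof.
move=> hE tf H; apply: (induced_tf (f := fun i : 'I_7 => nth x0 xs i) hE tf) => i j.
by rewrite H // hE.
Qed.


Lemma ord3P (P : nat -> Prop) : P 0 -> P 1 -> P 2 -> forall a, a < 3 -> P a.
Proof. by move=> ? ? ? [|[|[|a]]]. Qed.

Section Hole.
Variables (T : finType) (e : rel T).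
Hypothesis esy : symmetric e.
Hypothesis eirr : irreflexive e.
Hypothesis noT2 : ~ induced_in e T2.
Hypothesis noX2 : ~ induced_in e X2.
Hypothesis noK3 : ~ induced_in e K3.
Variables (m : nat) (c : 'I_m -> T).
Hypothesis m10 : 10 <= m.
Hypothesis cinj : injective c.
Hypothesis Hc : forall i j, e (c i) (c j) = cycle_rel m i j.
Hypothesis minh : forall (m' : nat) (c' : 'I_m' -> T), is_hole e c' -> m <= m'.

Lemma ord_addA (j : 'I_m) a b : ord_add (ord_add j a) b = ord_add j (a + b).
Proof. by apply: val_inj => /=; rewrite modnDml addnA. Qed.

Lemma ord_add0 (j : 'I_m) : ord_add j 0 = j.
Proof. by apply: val_inj => /=; rewrite addn0 modn_small. Qed.

Lemma ord_addm (j : 'I_m) x : ord_add j (x + m) = ord_add j x.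
Proof. by apply: val_inj => /=; rewrite addnA modnDr. Qed.

Lemma ord_addmm (j : 'I_m) : ord_add j m = j.
Proof. by have := ord_addm j 0; rewrite add0n ord_add0. Qed.

Lemma ord_add_eq (j : 'I_m) a b : a < m -> b < m -> (ord_add j a == ord_add j b) = (a == b).
Proof. by move=> am bm; rewrite -val_eqE /= eqn_modDl (modn_small am) (modn_small bm). Qed.

Lemma ord_add_surj (j : 'I_m) k : exists2 d, d < m & k = ord_add j d.
Proof.
exists ((k + (m - j)) %% m); first by rewrite ltn_pmod //; lia.
apply: val_inj => /=; rewrite modnDmr.
have -> : j + (k + (m - j)) = k + m by have := ltn_ord j; lia.
by rewrite modnDr modn_small.
Qed.

Lemma Ecc (j : 'I_m) a b : a < m -> b < m ->
  e (c (ord_add j a)) (c (ord_add j b)) = (b == a.+1 %% m) || (a == b.+1 %% m).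
Proof.
move=> am bm; rewrite Hc /cycle_rel /= !modnDml -!addnA !eqn_modDl !addn1.
by rewrite (modn_small am) (modn_small bm).
Qed.

Lemma Ecc9 (j : 'I_m) a b : a < 9 -> b < 9 ->
  e (c (ord_add j a)) (c (ord_add j b)) = (b == a.+1) || (a == b.+1).
Proof.
move=> a9 b9; rewrite Ecc; try lia.
by rewrite !modn_small //; lia.
Qed.

Lemma noTri x y z : e x y -> e y z -> e x z -> False.
Proof.
move=> xy yz xz; apply: noK3.
apply: (induced_tf (f := fun i : 'I_3 => nth x [:: x; y; z] i) (fun i j => erefl) K3_tf).
move=> [a Ha] [b Hb] /=; move: a Ha b Hb; apply: ord3P; apply: ord3P => /=;
  by rewrite ?eirr ?xy ?yz ?xz // esy ?xy ?yz ?xz.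
Qed.


Lemma hole_short v (j : 'I_m) g : v \notin codom c -> 3 <= g -> g.+2 < m ->
  e v (c j) -> e v (c (ord_add j g)) ->
  (forall k, 0 < k < g -> ~~ e v (c (ord_add j k))) -> False.
Proof.
move=> vC g3 gm ej eg en.
pose c' (k : 'I_g.+2) := if k <= g then c (ord_add j k) else v.
suff /minh : is_hole e c' by lia.
split; first lia.
split.
  move=> a b; rewrite /c'; case: (leqP a g) => ha; case: (leqP b g) => hb.
  - move/cinj/eqP; rewrite ord_add_eq; try lia.
    by move/eqP/val_inj.
  - by move=> E; case/negP: vC; rewrite -E codom_f.
  - by move=> E; case/negP: vC; rewrite E codom_f.
  - move=> _; apply: ord_inj; have := ltn_ord a; have := ltn_ord b.
    lia.
move=> a b; rewrite /c' /cycle_rel.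
have := ltn_ord a; have := ltn_ord b.
move: (nat_of_ord a) (nat_of_ord b) => {}a {}b bl al.
case: (leqP a g) => ha; case: (leqP b g) => hb.
- rewrite Ecc; try lia.
  rewrite (modn_small (_ : a.+1 < m)); last lia.
  rewrite (modn_small (_ : b.+1 < m)); last lia.
  by rewrite !addn1 !modn_small.
- have -> : b = g.+1 by lia.
  rewrite esy (modn_small (_ : a + 1 < g.+2)); last lia.
  rewrite !addn1 modnn eqSS.
  have [->|a0] := eqVneq a 0; first by rewrite ord_add0 ej orbT.
  have [->|ag] := eqVneq a g; first by rewrite eg ?eqxx ?orbT.
  by rewrite (negbTE (en a _)) ?(negbTE a0) 1?eq_sym ?(negbTE ag) //; lia.
- have -> : a = g.+1 by lia.
  rewrite (modn_small (_ : b + 1 < g.+2)); last lia.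
  rewrite !addn1 modnn eqSS.
  have [->|b0] := eqVneq b 0; first by rewrite ord_add0 ej.
  have [->|bg] := eqVneq b g; first by rewrite eg ?eqxx ?orbT.
  by rewrite (negbTE (en b _)) ?(negbTE b0) 1?eq_sym ?(negbTE bg) //; lia.
- have -> : a = g.+1 by lia.
  have -> : b = g.+1 by lia.
  by rewrite eirr addn1 modnn.
Qed.

Lemma gap v (j : 'I_m) : v \notin codom c -> e v (c j) ->
  exists g, [/\ (g == 2) || (g == m - 2) || (g == m), 1 < g <= m,
     e v (c (ord_add j g)) & forall k, 0 < k < g -> ~~ e v (c (ord_add j k))].
Proof.
move=> vC ej.
have ex : exists k, (0 < k) && e v (c (ord_add j k)).
  by exists m; rewrite ord_addmm ej andbT; lia.
case: (ex_minnP ex) => g /andP [g0 eg] gmin.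
have gm : g <= m by apply: gmin; rewrite ord_addmm ej; lia.
have gnot : forall k, 0 < k < g -> ~~ e v (c (ord_add j k)).
  move=> k /andP[k0 kg]; apply/negP => ek; have := gmin k; rewrite k0 ek => /(_ isT); lia.
have g1 : g != 1.
  apply/eqP => g1; subst g; apply: (noTri ej _ eg).
  by rewrite -{1}(ord_add0 j) Ecc9.
have gm1 : g != m - 1.
  apply/eqP => gm1; subst g; apply: (noTri eg _ ej).
  rewrite -{2}(ord_add0 j) Ecc; try lia.
  by rewrite (_ : (m - 1).+1 = m) ?modnn ?orbT //; lia.
exists g; split => //; last by lia.
case: (leqP 3 g) => g3; last by move: g1; lia.
case: (ltnP g.+2 m) => gm2; last by move: gm1; lia.
by case: (hole_short vC g3 gm2 ej eg gnot).
Qed.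

Lemma from2 v (j : 'I_m) : v \notin codom c -> e v (c j) -> e v (c (ord_add j 2)) ->
  ~~ e v (c (ord_add j 1)) ->
  forall k, k < m -> e v (c (ord_add j k)) = (k == 0) || (k == 2).
Proof.
move=> vC e0 e2 n1.
have [g1 [g1c g1b eg1 gn1]] := gap vC e2.
rewrite ord_addA in eg1.
have gn1' : forall k, 0 < k < g1 -> ~~ e v (c (ord_add j (2 + k))).
  by move=> k kg; rewrite -ord_addA; apply: gn1.
case/orP: g1c => [/orP [] | ] /eqP g1E; subst g1.
-
  exfalso.
  have n3 := gn1' 1 isT.
  have [g2 [g2c g2b eg2 gn2]] := gap vC eg1.
  have g22 : g2 = 2.
    case/orP: g2c => [/orP [] | ] /eqP // g2E; exfalso.
    + have := gn2 (m - 4); rewrite ord_addA (_ : 2 + 2 + (m - 4) = m); last lia.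
      by rewrite ord_addmm e0 => H; case/negP: (H ltac:(lia)).
    + have := gn2 (m - 4); rewrite ord_addA (_ : 2 + 2 + (m - 4) = m); last lia.
      by rewrite ord_addmm e0 => H; case/negP: (H ltac:(lia)).
  subst g2; rewrite ord_addA in eg2.
  have n5 : ~~ e v (c (ord_add j 5)) by have := gn2 1 isT; rewrite ord_addA.
  have [g3 [g3c g3b eg3 gn3]] := gap vC eg2.
  have n7 : ~~ e v (c (ord_add j 7)).
    by have := gn3 1; rewrite ord_addA; apply; lia.
  have e0' : e v (c (ord_add j 0)) by rewrite ord_add0.
  move: n1 n3 n7 => /negbTE n1 /negbTE n3 /negbTE n7.
  apply: noT2; apply: (induced7 (x0 := v) (xs := [:: v; c (ord_add j 0); c (ord_add j 4);
     c (ord_add j 6); c (ord_add j 1); c (ord_add j 3); c (ord_add j 7)]) (fun i j => ednE _ i j) T2_tf).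
  apply: ord7P; apply: ord7P; rewrite /edn /=.
  all: try first [ by rewrite Ecc9 | by rewrite eirr | by rewrite ?e0' ?eg1 ?eg2 ?n1 ?n3 ?n7
             | by rewrite esy ?e0' ?eg1 ?eg2 ?n1 ?n3 ?n7 ].
-
  move=> k km.
  case: k km => [|[|[|k]]] km; rewrite ?ord_add0 ?e0 ?(negbTE n1) ?e2 //.
  have := gn1' k.+1; rewrite (_ : 2 + k.+1 = k.+3) // => /(_ _)/negbTE -> //; lia.
- exfalso.
  have := gn1' (m - 2); rewrite (_ : 2 + (m - 2) = m); last lia.
  by rewrite ord_addmm e0 => H; case/negP: (H ltac:(lia)).
Qed.

Lemma claimA v (j : 'I_m) : v \notin codom c -> e v (c j) ->
  exists i : 'I_m, (forall k, k < m -> e v (c (ord_add i k)) = (k == 0)) \/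
                   (forall k, k < m -> e v (c (ord_add i k)) = (k == 0) || (k == 2)).
Proof.
move=> vC ej.
have [g [gc gb eg gn]] := gap vC ej.
case/orP: gc => [/orP [] | ] /eqP gE; subst g.
- exists j; right; apply: from2 => //; exact: gn.
- exists (ord_add j (m - 2)); right.
  have [g' [g'c g'b eg' gn']] := gap vC eg.
  have e2 : e v (c (ord_add (ord_add j (m - 2)) 2)).
    by rewrite ord_addA (_ : m - 2 + 2 = m) ?ord_addmm //; lia.
  have g'2 : g' = 2.
    case: (ltnP 2 g') => g'l; last by lia.
    by move: (gn' 2 ltac:(lia)); rewrite e2.
  subst g'; apply: from2 => //; exact: gn'.
- exists j; left => k km.
  case: k km => [|k] km; first by rewrite ord_add0 ej.
  by apply/negbTE/gn; lia.
Qed.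

Lemma nbr1 v (i : 'I_m) : (forall k, k < m -> e v (c (ord_add i k)) = (k == 0)) ->
  nbr_on e c v = [set c i].
Proof.
move=> H; apply/setP => u; rewrite !inE.
case: (boolP (u \in codom c)) => [/codomP [k ->]|uC].
  have [d dm ->] := ord_add_surj i k.
  rewrite H // andbT (inj_eq cinj) -{2}(ord_add0 i) ord_add_eq //; lia.
by rewrite andbF; apply/esym/negP => /eqP E; case/negP: uC; rewrite E codom_f.
Qed.

Lemma nbr2 v (i : 'I_m) : (forall k, k < m -> e v (c (ord_add i k)) = (k == 0) || (k == 2)) ->
  nbr_on e c v = [set c i; c (ord_add i 2)].
Proof.
move=> H; apply/setP => u; rewrite !inE.
case: (boolP (u \in codom c)) => [/codomP [k ->]|uC].
  have [d dm ->] := ord_add_surj i k.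
  rewrite H // andbT !(inj_eq cinj) -{2}(ord_add0 i) !ord_add_eq //; lia.
by rewrite andbF; apply/esym/negP => /orP [] /eqP E; case/negP: uC; rewrite E codom_f.
Qed.

Definition onC x := (x \in codom c) || [exists k, e x (c k)].

Lemma dom_step x y : e y x -> onC y -> onC x.
Proof.
move=> yx Py; apply/negPn/negP => /norP [xC /existsPn xN].
have xN' : forall k, e x (c k) = false by move=> k; apply/negbTE/xN.
case/orP: Py => [/codomP [k yk] | /existsP [j ej]].
  by subst y; move: yx; rewrite esy xN'.
case: (boolP (y \in codom c)) => [/codomP [k yk] | yC].
  by subst y; move: yx; rewrite esy xN'.
have [i [H|H]] := claimA yC ej.
- (* T2 centred at c i *)
  pose b := ord_add i (m - 2).
  have sh : forall k, 2 <= k -> ord_add b k = ord_add i (k - 2).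
    move=> k k2; rewrite /b ord_addA (_ : m - 2 + k = (k - 2) + m) ?ord_addm //; lia.
  have Y0 : e y (c (ord_add b 0)) = false.
    by rewrite /b ord_addA H; [case: eqP => // ?; lia | lia].
  have Y1 : e y (c (ord_add b 1)) = false.
    by rewrite /b ord_addA H; [case: eqP => // ?; lia | lia].
  have Y2 : e y (c (ord_add b 2)) = true by rewrite sh // H; lia.
  have Y3 : e y (c (ord_add b 3)) = false by rewrite sh // H; lia.
  have Y4 : e y (c (ord_add b 4)) = false by rewrite sh // H; lia.
  apply: noT2; apply: (induced7 (x0 := x) (xs := [:: c (ord_add b 2); c (ord_add b 1);
     c (ord_add b 3); y; c (ord_add b 0); c (ord_add b 4); x]) (fun i j => ednE _ i j) T2_tf).
  apply: ord7P; apply: ord7P; rewrite /edn /=.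
  all: try first [ by rewrite Ecc9 | by rewrite eirr | by rewrite ?Y0 ?Y1 ?Y2 ?Y3 ?Y4 ?xN' ?yx
             | by rewrite esy ?Y0 ?Y1 ?Y2 ?Y3 ?Y4 ?xN' ?yx ].
-
  pose b := ord_add i (m - 1).
  have sh : forall k, 1 <= k -> ord_add b k = ord_add i (k - 1).
    move=> k k2; rewrite /b ord_addA (_ : m - 1 + k = (k - 1) + m) ?ord_addm //; lia.
  have Y0 : e y (c (ord_add b 0)) = false.
    rewrite /b ord_addA H; last lia.
    by case: eqP => [?|_]; [lia | case: eqP => // ?; lia].
  have Y1 : e y (c (ord_add b 1)) = true by rewrite sh // H; lia.
  have Y2 : e y (c (ord_add b 2)) = false by rewrite sh // H; lia.
  have Y3 : e y (c (ord_add b 3)) = true by rewrite sh // H; lia.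
  have Y4 : e y (c (ord_add b 4)) = false by rewrite sh // H; lia.
  apply: noX2; apply: (induced7 (x0 := x) (xs := [:: c (ord_add b 3); y; c (ord_add b 1);
     c (ord_add b 2); c (ord_add b 4); x; c (ord_add b 0)]) (fun i j => ednE _ i j) X2_tf).
  apply: ord7P; apply: ord7P; rewrite /edn /=.
  all: try first [ by rewrite Ecc9 | by rewrite eirr | by rewrite ?Y0 ?Y1 ?Y2 ?Y3 ?Y4 ?xN' ?yx
             | by rewrite esy ?Y0 ?Y1 ?Y2 ?Y3 ?Y4 ?xN' ?yx ].
Qed.

Hypothesis conn : forall x y, connect e x y.

Lemma sec_main v : (exists i : 'I_m, nbr_on e c v = [set c i]) \/
      (exists i : 'I_m, nbr_on e c v = [set c i; c (ord_add i 2)]).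
Proof.
case: (boolP (v \in codom c)) => [/codomP [j ->] | vC].
  right; exists (ord_add j (m - 1)); apply: nbr2 => k km.
  rewrite {1}(_ : j = ord_add (ord_add j (m - 1)) 1); last first.
    by rewrite ord_addA subnK ?ord_addmm //; lia.
  rewrite Ecc; try lia.
  rewrite (modn_small (_ : 2 < m)); last lia.
  case: (ltnP k.+1 m) => kl.
    by rewrite (modn_small kl) eqSS orbC eq_sym.
  case: k km kl => [|[|[|k]]] km kl; try lia.
  by rewrite (_ : k.+4 = m) ?modnn //; lia.
have m0 : 0 < m by lia.
have cl : closed e [pred x | onC x].
  move=> x y xy; rewrite !inE; apply/idP/idP; apply: dom_step => //.
  by rewrite esy.
have := closed_connect cl (conn (c (Ordinal m0)) v); rewrite !inE /onC codom_f /=.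
case/esym/orP => [vC'|/existsP [j ej]]; first by rewrite vC' in vC.
by have [i [H|H]] := claimA vC ej; [left|right]; exists i; [exact: nbr1 | exact: nbr2].
Qed.
End Hole.

Unset Implicit Arguments.
Set Strict Implicit.

Theorem proposition3p4 (T : finType) (e : rel T) :
  simple_graph e -> connected_graph e -> almost_bipartite_permutation e ->
  forall (m : nat) (c : 'I_m -> T),
    is_hole e c ->
    (forall (m' : nat) (c' : 'I_m' -> T), is_hole e c' -> m <= m') ->
    forall v : T,
      (exists i : 'I_m, nbr_on e c v = [set c i]) \/
      (exists i : 'I_m, nbr_on e c v = [set c i; c (ord_add i 2)]).
Proof.
move=> [esy eirr] conn [noT2 noX2 noX3 noK3 noC] m c [m5 [cinj Hc]] minh v.
have m10 : 10 <= m.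
  case: (leqP 10 m) => // m9; exfalso; apply: (noC m); first lia.
  by exists c.
exact: (sec_main esy eirr noT2 noX2 noK3 m10 cinj Hc minh conn v).
Qed.
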